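(* For every value profile $(v_1,v_2)\in\mathbb R^2_{\ge0}$, the allocation $x=x(v_1,v_2)$ of the two-bidder auction defined below satisfies $\bar W(x)\ge\frac34\bar W^*$.
   Context: One divisible good, two bidders with values per unit $v_1,v_2\ge0$ and known budgets $B_1=B_2=1$. The allocation $x(v_1,v_2)=(x_1,x_2)$ is symmetric ($x(v_1,v_2)$ is obtained from $x(v_2,v_1)$ by swapping coordinates) and for $v_1\ge v_2$ is given by the first applicable rule: if $v_1=v_2$, $x=(\frac12,\frac12)$; else if $v_2\le\frac13$, $x=(1,0)$; else if $\frac13\le v_2\le1$, $x=(\frac14+\frac1{4v_2},\frac34-\frac1{4v_2})$; else ($v_2\ge1$) $x=(\frac12,\frac12)$. Liquid welfare: $\bar W(x)=\sum_i\min\{v_ix_i,B_i\}$; $\bar W^*=\max\{\bar W(x):x\ge0,x_1+x_2=1\}$. *)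

(* Defs.v *)
From Stdlib Require Import Reals Lra.
Open Scope R_scope.

Definition alloc_hi (v1 v2 : R) : R * R :=
  if Req_EM_T v1 v2 then (1/2, 1/2)
  else if Rle_dec v2 (1/3) then (1, 0)
  else if Rle_dec v2 1 then (1/4 + 1/(4*v2), 3/4 - 1/(4*v2))
  else (1/2, 1/2).

Definition alloc (v1 v2 : R) : R * R :=
  if Rle_dec v2 v1 then alloc_hi v1 v2
  else let p := alloc_hi v2 v1 in (snd p, fst p).

Definition B1 : R := 1.
Definition B2 : R := 1.

Definition liquid_welfare (v1 v2 : R) (x : R * R) : R :=
  Rmin (v1 * fst x) B1 + Rmin (v2 * snd x) B2.

Definition feasible (x : R * R) : Prop :=
  0 <= fst x /\ 0 <= snd x /\ fst x + snd x = 1.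

Definition is_optimal_LW (v1 v2 w : R) : Prop :=
  (exists y, feasible y /\ liquid_welfare v1 v2 y = w) /\
  (forall y, feasible y -> liquid_welfare v1 v2 y <= w).

(* Main.v *)
Require Import Defs.
From Stdlib Require Import Reals Lra Psatz.
Open Scope R_scope.

Ltac mins := repeat match goal with |- context[Rle_dec ?a ?b] => destruct (Rle_dec a b) end.
Ltac prep y := let y1 := fresh "y1" in let y2 := fresh "y2" in destruct y as [y1 y2];
  unfold feasible, liquid_welfare, Rmin in *; unfold Defs.B1, Defs.B2 in *; simpl in *.

Lemma U1 v1 v2 y : 0 <= v2 <= v1 -> feasible y -> liquid_welfare v1 v2 y <= v1.
Proof. prep y; intros; mins; nra. Qed.
Lemma U2 v1 v2 y : 0 <= v2 <= v1 -> feasible y -> liquid_welfare v1 v2 y <= 2.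
Proof. prep y; intros; mins; lra. Qed.
Lemma U3 v1 v2 y : 0 <= v2 <= v1 -> 1 <= v1 -> feasible y ->
  v1 * liquid_welfare v1 v2 y <= v1 + v2*(v1-1).
Proof. prep y; intros.
 assert (ha : v1 * /v1 = 1) by (field; lra). set (a := /v1) in *.
 assert (0 < a) by (unfold a; apply Rinv_0_lt_compat; lra).
 mins; destruct (Rle_dec y1 a); nra.
Qed.

Lemma opt_hi v1 v2 : 0 <= v2 <= v1 -> exists ys, feasible ys /\
  forall y, feasible y -> liquid_welfare v1 v2 y <= liquid_welfare v1 v2 ys.
Proof. intros H.
 destruct (Rle_dec v1 1).
 - exists (1,0). split. unfold feasible; simpl; lra.
   intros y Hy. pose proof (U1 v1 v2 y H Hy). set (L := liquid_welfare v1 v2 y) in *.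
   unfold liquid_welfare, Rmin, Defs.B1, Defs.B2; simpl. mins; lra.
 - assert (ha : v1 * /v1 = 1) by (field; lra). set (a := /v1) in *.
   assert (0 < a) by (unfold a; apply Rinv_0_lt_compat; lra).
   assert (a < 1) by nra.
   exists (a, 1-a). split. unfold feasible; simpl; lra.
   intros y Hy. pose proof (U2 v1 v2 y H Hy). pose proof (U3 v1 v2 y H ltac:(lra) Hy).
   set (L := liquid_welfare v1 v2 y) in *.
   unfold liquid_welfare, Rmin, Defs.B1, Defs.B2; simpl. mins; nra.
Qed.

Lemma bound_hi v1 v2 y : 0 <= v2 <= v1 -> feasible y ->
  liquid_welfare v1 v2 (alloc_hi v1 v2) >= 3/4 * liquid_welfare v1 v2 y.
Proof. intros H Hy.
 pose proof (U1 v1 v2 y H Hy). pose proof (U2 v1 v2 y H Hy).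
 assert (H3 : 1 <= v1 -> v1 * liquid_welfare v1 v2 y <= v1 + v2*(v1-1)) by (intro; apply U3; auto).
 set (L := liquid_welfare v1 v2 y) in *.
 unfold alloc_hi.
 destruct (Req_EM_T v1 v2).
 { subst. unfold liquid_welfare, Rmin, Defs.B1, Defs.B2; simpl. mins.
   all: destruct (Rle_dec 1 v2); [specialize (H3 ltac:(lra)) |]; nra. }
 destruct (Rle_dec v2 (1/3)).
 { unfold liquid_welfare, Rmin, Defs.B1, Defs.B2; simpl. mins.
   all: destruct (Rle_dec 1 v1); [specialize (H3 ltac:(lra)) |]; nra. }
 destruct (Rle_dec v2 1).
 { assert (hw : v2 * /v2 = 1) by (field; lra). set (w := /v2) in *.
   assert (0 < w) by (unfold w; apply Rinv_0_lt_compat; lra).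
   assert (1 <= w <= 3) by nra.
   replace (1/(4*v2)) with (w/4) by (unfold w; field; lra). clearbody w.
   unfold liquid_welfare, Rmin, Defs.B1, Defs.B2; simpl. mins.
   all: destruct (Rle_dec 1 v1); [specialize (H3 ltac:(lra)) |]; try nra. 
   assert (K1 : (v2+1)*(v1*v1*(v2+1) - 4*v1*v2+3*v2*v2) >= 0).
   { assert (E: (v2+1)*(v1*v1*(v2+1) - 4*v1*v2+3*v2*v2) = ((v2+1)*v1-2*v2)^2 + v2*v2*(3*v2-1)) by ring.
     rewrite E. assert (0 <= v2*v2*(3*v2-1)) by (apply Rmult_le_pos; nra). pose proof (pow2_ge_0 ((v2+1)*v1-2*v2)). lra. }
   assert (K2 : v1*v1*(v2+1) - 4*v1*v2+3*v2*v2 >= 0) by nra.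
   assert (K3 : v1*v1*(1+w) - 4*v1 + 3*v2 >= 0).
   { assert (E: v1*v1*(1+w) - 4*v1 + 3*v2 = w*(v1*v1*(v2+1) - 4*v1*v2+3*v2*v2)).
     { replace (w*(v1*v1*(v2+1) - 4*v1*v2+3*v2*v2)) with ((v2*w)*(v1*v1 - 4*v1 + 3*v2) + w*v1*v1) by ring.
       rewrite hw; ring. }
     rewrite E. nra. }
   assert (K4 : v1 * (v1 * (1 / 4 + w / 4) + v2 * (3 / 4 - w / 4) - 3/4*L) >= 0).
   { assert (E: v2 * (3 / 4 - w / 4) = 3/4*v2 - 1/4). { transitivity (3/4*v2 - (v2*w)/4). field. rewrite hw. field. } rewrite E. nra. }
   nra. }
 { unfold liquid_welfare, Rmin, Defs.B1, Defs.B2; simpl. mins.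
   all: destruct (Rle_dec 1 v1); [specialize (H3 ltac:(lra)) |]; nra. }
Qed.

Lemma lw_swap v1 v2 a b : liquid_welfare v1 v2 (a,b) = liquid_welfare v2 v1 (b,a).
Proof. unfold liquid_welfare, Defs.B1, Defs.B2; simpl; ring. Qed.

Lemma lw_swap2 v1 v2 p : liquid_welfare v1 v2 (snd p, fst p) = liquid_welfare v2 v1 p.
Proof. destruct p as [a b]. apply lw_swap. Qed.

Lemma feas_swap a b : feasible (a,b) -> feasible (b,a).
Proof. unfold feasible; simpl; lra. Qed.

Lemma opt_all v1 v2 : 0 <= v1 -> 0 <= v2 -> exists ys, feasible ys /\
  forall y, feasible y -> liquid_welfare v1 v2 y <= liquid_welfare v1 v2 ys.
Proof. intros. destruct (Rle_dec v2 v1).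
 - apply opt_hi; lra.
 - destruct (opt_hi v2 v1) as [[a b] [Hf Hm]]; [lra|].
   exists (b,a). split. apply feas_swap; auto.
   intros [c d] Hcd. rewrite (lw_swap v1 v2 c d), (lw_swap v1 v2 b a). apply Hm. apply feas_swap; auto.
Qed.

Lemma bound_all v1 v2 y : 0 <= v1 -> 0 <= v2 -> feasible y ->
  liquid_welfare v1 v2 (alloc v1 v2) >= 3/4 * liquid_welfare v1 v2 y.
Proof. intros. unfold alloc. destruct (Rle_dec v2 v1).
 - apply bound_hi; auto; lra.
 - destruct y as [c d].
   rewrite lw_swap2, (lw_swap v1 v2 c d). apply bound_hi; [lra|]. apply feas_swap; auto.
Qed.

Theorem mainTheorem12 :
  forall v1 v2 : R, 0 <= v1 -> 0 <= v2 ->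
    (exists Wstar, is_optimal_LW v1 v2 Wstar) /\
    (forall Wstar, is_optimal_LW v1 v2 Wstar ->
       liquid_welfare v1 v2 (alloc v1 v2) >= 3/4 * Wstar).
Proof.
  intros v1 v2 H1 H2. split.
  - destruct (opt_all v1 v2 H1 H2) as [ys [Hf Hm]].
    exists (liquid_welfare v1 v2 ys). split; [exists ys; auto | exact Hm].
  - intros W [[y [Hy <-]] _]. apply bound_all; auto.
Qed.
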